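(* In a partial synchronized communication system, every trajectory is covered if and only if, at some time, every ring contains a robot.
   Context: Model. A system consists of pairwise disjoint unit circles $C_1,\dots,C_n$ in the plane (trajectories) and a communication range $r>0$. Its communication graph $G$ has vertex set $\{C_1,\dots,C_n\}$, $C_i,C_j$ adjacent iff the distance between their centres is at most $2+r$. Positions on a circle are angles (mod $2\pi$). For an edge $(i,j)$, the link position $\phi_{ij}$ is the angle of the point of $C_i$ closest to $C_j$. A schedule $F=(f,g)$ assigns each circle a starting angle $f(C_i)$ and direction $g(C_i)\in\{1,-1\}$; a robot following it on $C_i$ is at $f(C_i)+g(C_i)2\pi t$ at time $t$. $F$ is a synchronization schedule if $g(C_i)=-g(C_j)$ for adjacent circles and robots following $F$ on adjacent $C_i,C_j$ are at $\phi_{ij},\phi_{ji}$ at exactly the same times. A synchronized communication system (SCS) consists of $n$ robots, initially one per circle, following a synchronization schedule, with the switching rule: when a robot on $C_i$ reaches $\phi_{ij}$ and $C_j$ is empty, it instantly passes to $C_j$ and follows the schedule of $C_j$; if $C_j$ has a robot, they meet and each stays on its circle. A partial SCS arises from an SCS by letting some robots leave (possibly at different times); the remaining robots never leave. A trajectory is covered if every point of it is visited periodically by the surviving robots. Rings. Trace a point moving along a circle $C_i$ in direction $g(C_i)$; whenever it reaches a link position $\phi_{ij}$ of its current circle, it passes to $C_j$ at $\phi_{ji}$ and continues in direction $g(C_j)$ (the motion of a robot that never meets anyone). This motion is periodic and the closed curve traced is a ring; every arc of a circle between consecutive link positions belongs to exactly one ring, so the circles decompose into rings overlapping only at link positions.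 A robot is in a ring if it lies on a point of that ring. *)

(* Defs.v *)
From Stdlib Require Import Reals.
From mathcomp Require Import ssreflect ssrbool eqtype ssrnat fintype.
Open Scope R_scope.

(** Geometry.  A system of [n] unit circles is given by their centres. *)
Definition point := (R * R)%type.

Definition dist (p q : point) : R :=
  sqrt ((fst p - fst q) ^ 2 + (snd p - snd q) ^ 2).

Definition disjoint_circles {n} (ctr : 'I_n -> point) : Prop :=
  forall i j : 'I_n, i <> j -> dist (ctr i) (ctr j) > 2.

Definition adjacent {n} (ctr : 'I_n -> point) (r : R) (i j : 'I_n) : Prop :=
  i <> j /\ dist (ctr i) (ctr j) <= 2 + r.

Definition pt {n} (ctr : 'I_n -> point) (i : 'I_n) (th : R) : point :=
  (fst (ctr i) + cos th, snd (ctr i) + sin th).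

(** The link position on [C_i] for the edge (i,j): the point of [C_i]
    closest to [C_j] (as a point of the plane; the angle phi_ij is its
    angle, determined mod 2 pi). *)
Definition link {n} (ctr : 'I_n -> point) (i j : 'I_n) : point :=
  let d := dist (ctr i) (ctr j) in
  (fst (ctr i) + (fst (ctr j) - fst (ctr i)) / d,
   snd (ctr i) + (snd (ctr j) - snd (ctr i)) / d).

Definition is_link {n} (ctr : 'I_n -> point) (r : R) (i : 'I_n) (P : point)
  : Prop := exists j, adjacent ctr r i j /\ P = link ctr i j.

(** Schedule: starting angle [f] and direction [g] (valued in {1,-1}).
    A robot following it on [C_i] is at angle [f i + g i * 2 pi t]. *)
Definition sched {n} (f g : 'I_n -> R) (i : 'I_n) (t : R) : R :=
  f i + g i * (2 * PI * t).

Definition spos {n} (ctr : 'I_n -> point) (f g : 'I_n -> R) (i : 'I_n) (t : R)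
  : point := pt ctr i (sched f g i t).

Definition is_schedule {n} (g : 'I_n -> R) : Prop :=
  forall i, g i = 1 \/ g i = -1.

Definition sync_schedule {n} (ctr : 'I_n -> point) (r : R) (f g : 'I_n -> R)
  : Prop :=
  is_schedule g /\
  forall i j, adjacent ctr r i j ->
    g i = - g j /\
    forall t, spos ctr f g i t = link ctr i j <-> spos ctr f g j t = link ctr j i.

Definition at_link {n} (ctr : 'I_n -> point) (r : R) (f g : 'I_n -> R)
  (i j : 'I_n) (t : R) : Prop :=
  adjacent ctr r i j /\ spos ctr f g i t = link ctr i j.

Definition left_lim {n} (p : R -> 'I_n) (t : R) (c : 'I_n) : Prop :=
  exists eps, 0 < eps /\ forall s, t - eps < s < t -> p s = c.

Definition right_const {n} (p : R -> 'I_n) (t : R) : Prop :=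
  exists eps, 0 < eps /\ forall s, t <= s < t + eps -> p s = p t.

(** ----- Partial SCS -----
   Robots are named by [k : 'I_n]; robot [k] starts on [C_k] at time 0.
   [leave k = Some L]: robot k leaves at time L (present on [0, L));
   [leave k = None]: robot k never leaves (a surviving robot).
   [pos k t] is the circle on which robot k is at time t; its position on
   that circle is the schedule point [spos ctr f g (pos k t) t]. *)
Definition present (leave : option R) (t : R) : Prop :=
  0 <= t /\ match leave with None => True | Some L => t < L end.

Definition surviving (leave : option R) : Prop := leave = None.

(** [C_j] is empty at time [t] (just before any switch at time t). *)
Definition empty_at {n} (leave : 'I_n -> option R) (pos : 'I_n -> R -> 'I_n)
  (j : 'I_n) (t : R) : Prop :=
  forall k, present (leave k) t -> ~ left_lim (pos k) t j.

Definition partial_scs {n} (ctr : 'I_n -> point) (r : R) (f g : 'I_n -> R)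
  (leave : 'I_n -> option R) (pos : 'I_n -> R -> 'I_n) : Prop :=
  forall k : 'I_n,
    (forall s, s < 0 -> pos k s = k) /\
    (forall t, present (leave k) t ->
       right_const (pos k) t /\
       exists c, left_lim (pos k) t c /\
         ((exists j, at_link ctr r f g c j t /\ empty_at leave pos j t
                     /\ pos k t = j)
          \/ ((forall j, ~ (at_link ctr r f g c j t /\ empty_at leave pos j t))
              /\ pos k t = c))).

(** ----- Rings -----
   Free motion of a point started on [C_i] at time [t0] (the motion of a
   robot that never meets anyone). *)
Definition free_motion {n} (ctr : 'I_n -> point) (r : R) (f g : 'I_n -> R)
  (i : 'I_n) (t0 : R) (q : R -> 'I_n) : Prop :=
  (forall s, s < t0 -> q s = i) /\
  (forall t, t0 <= t ->
     right_const q t /\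
     exists c, left_lim q t c /\
       ((exists j, at_link ctr r f g c j t /\ q t = j)
        \/ ((forall j, ~ at_link ctr r f g c j t) /\ q t = c))).

(** The (non-link) point [P'] of [C_j] lies on the ring through the
    (non-link) point [P] of [C_i]. Rings are taken as unions of the open
    arcs between consecutive link positions. *)
Definition same_ring {n} (ctr : 'I_n -> point) (r : R) (f g : 'I_n -> R)
  (i : 'I_n) (P : point) (j : 'I_n) (P' : point) : Prop :=
  ~ is_link ctr r i P /\ ~ is_link ctr r j P' /\
  exists t0 q, spos ctr f g i t0 = P /\ free_motion ctr r f g i t0 q /\
    exists s, t0 <= s /\ q s = j /\ spos ctr f g j s = P'.

Definition every_ring_has_robot {n} (ctr : 'I_n -> point) (r : R)
  (f g : 'I_n -> R) (leave : 'I_n -> option R) (pos : 'I_n -> R -> 'I_n)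
  (t : R) : Prop :=
  forall (i : 'I_n) (th : R), ~ is_link ctr r i (pt ctr i th) ->
    exists k, surviving (leave k) /\
      same_ring ctr r f g i (pt ctr i th) (pos k t) (spos ctr f g (pos k t) t).

Definition all_covered {n} (ctr : 'I_n -> point) (f g : 'I_n -> R)
  (leave : 'I_n -> option R) (pos : 'I_n -> R -> 'I_n) : Prop :=
  forall (i : 'I_n) (th : R), exists Per, 0 < Per /\
    forall t, 0 <= t -> exists s, t <= s <= t + Per /\
      exists k, surviving (leave k) /\ pos k s = i /\
                spos ctr f g i s = pt ctr i th.

(* Main.v *)
Require Import Defs.
From Stdlib Require Import Reals Lra Lia ZArith Classical ClassicalEpsilon.
From mathcomp Require Import ssreflect ssrfun ssrbool eqtype ssrnat seq fintype.
Open Scope R_scope.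



Lemma cos_periodZ x (z : Z) : cos (x + 2 * IZR z * PI) = cos x.
Proof.
destruct (Z_le_gt_dec 0 z) as [H|H].
- rewrite -(Z2Nat.id z) // -INR_IZR_INZ. apply cos_period.
- set y := x + 2 * IZR z * PI.
  have Hy : x = y + 2 * INR (Z.to_nat (- z)) * PI.
    rewrite INR_IZR_INZ Z2Nat.id; [|lia]. rewrite opp_IZR /y. lra.
  rewrite Hy cos_period //.
Qed.

Lemma sin_periodZ x (z : Z) : sin (x + 2 * IZR z * PI) = sin x.
Proof.
destruct (Z_le_gt_dec 0 z) as [H|H].
- rewrite -(Z2Nat.id z) // -INR_IZR_INZ. apply sin_period.
- set y := x + 2 * IZR z * PI.
  have Hy : x = y + 2 * INR (Z.to_nat (- z)) * PI.
    rewrite INR_IZR_INZ Z2Nat.id; [|lia]. rewrite opp_IZR /y. lra.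
  rewrite Hy sin_period //.
Qed.

Lemma cossin_eq a b : cos a = cos b -> sin a = sin b ->
  exists z : Z, b = a + 2 * IZR z * PI.
Proof.
move=> Hc Hs.
have H0 : sin (b - a) = 0 by rewrite sin_minus -Hc -Hs; ring.
have H1 : cos (b - a) = 1.
  rewrite cos_minus -Hc -Hs. have := sin2_cos2 a. unfold Rsqr. lra.
case: (sin_eq_0_0 _ H0) => k Hk.
case: (Z.Even_or_Odd k) => [[m Hm]|[m Hm]].
- exists m. rewrite Hm mult_IZR in Hk. lra.
- exfalso. rewrite Hk Hm plus_IZR mult_IZR in H1.
  have : cos (PI + 2 * IZR m * PI) = cos PI by rewrite cos_periodZ.
  rewrite cos_PI. have -> : PI + 2 * IZR m * PI = (2 * IZR m + 1) * PI by ring.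
  lra.
Qed.


Lemma fin_min (T : finType) (Q : T -> R -> Prop) :
  (forall x e e', 0 < e' <= e -> Q x e -> Q x e') ->
  (forall x, exists e, 0 < e /\ Q x e) ->
  exists e, 0 < e /\ forall x, Q x e.
Proof.
move=> Hdn Hex.
suff H : forall s : seq T, exists e, 0 < e /\ forall x, x \in s -> Q x e.
  case: (H (enum T)) => e [He Hq]. exists e; split => // x.
  apply: Hq. by rewrite mem_enum.
elim=> [|a s [e [He Hq]]].
  exists 1; split; [lra|] => x; by rewrite in_nil.
case: (Hex a) => ea [Hea Hqa].
exists (Rmin e ea); split; first by apply Rmin_pos.
move=> x; rewrite in_cons => /orP [/eqP ->|Hx].
  apply: (Hdn _ ea) => //; split; [by apply Rmin_pos|apply Rmin_r].
apply: (Hdn _ e); last by apply Hq.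
split; [by apply Rmin_pos|apply Rmin_l].
Qed.

Lemma fin_bound (T : finType) (F : T -> R) : exists M, forall x, F x <= M.
Proof.
suff H : forall s : seq T, exists M, forall x, x \in s -> F x <= M.
  case: (H (enum T)) => M HM. exists M => x. apply HM. by rewrite mem_enum.
elim=> [|a s [M HM]].
  exists 0 => x; by rewrite in_nil.
exists (Rmax M (F a)) => x; rewrite in_cons => /orP [/eqP ->|Hx].
  apply Rmax_r.
apply: Rle_trans (Rmax_l _ _). by apply HM.
Qed.



Lemma fwd_ind (P : R -> Prop) a :
  (forall u, a <= u -> (forall v, a <= v < u -> P v) ->
     exists e, 0 < e /\ forall v, u <= v < u + e -> P v) ->
  forall u, a <= u -> P u.
Proof.
move=> Hstep u1 Hu1.
apply NNPP => Hn.
set E := fun x => forall v, a <= v < x -> P v.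
have Hb : bound E.
  exists u1 => x Ex. apply Rnot_lt_le => Hlt. apply Hn. apply Ex. lra.
have Hne : exists x, E x by exists a => v; lra.
case: (completeness E Hb Hne) => m [Hub Hlub].
have Ham : a <= m by apply Hub => v; lra.
have Em : E m.
  move=> v [Hv1 Hv2].
  apply NNPP => Hpv.
  have : m <= v.
    apply Hlub => x Ex. apply Rnot_lt_le => Hlt. apply Hpv. apply Ex. lra.
  lra.
case: (Hstep m Ham Em) => e [He He'].
have : E (m + e).
  move=> v [Hv1 Hv2]. case: (Rlt_le_dec v m) => Hv.
  - apply Em; lra.
  - apply He'; lra.
move/Hub. lra.
Qed.

Lemma bwd_ind (P : R -> Prop) a b :
  (forall w, a <= w <= b -> (forall v, w < v <= b -> P v) ->
     P w /\ (a < w -> exists e, 0 < e /\ forall v, w - e < v < w -> P v)) ->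
  forall w, a <= w <= b -> P w.
Proof.
move=> Hstep.
have H := fwd_ind (fun x => a <= - x -> - x <= b -> P (- x)) (- b).
move=> w [Hw1 Hw2].
have -> : w = - - w by ring.
apply H; try lra.
move=> u Hu IH.
case: (Rlt_le_dec (- u) a) => Hua.
- exists (u + a); split; [lra|] => v Hv Hva. lra.
- have Hw : a <= - u <= b by lra.
  have IH' : forall v, - u < v <= b -> P v.
    move=> v Hv. have -> : v = - - v by ring. apply IH; lra.
  case: (Hstep _ Hw IH') => Pu Hleft.
  case: (Rle_lt_or_eq_dec _ _ (proj1 Hw)) => Hlt.
  + case: (Hleft Hlt) => e [He He'].
    exists e; split => // v Hv Hva Hvb.
    case: (Req_dec v u) => [->|Hne] //. apply He'; lra.
  + exists 1; split; [lra|] => v Hv Hva Hvb.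
    have -> : v = u by lra. done.
Qed.

Lemma pick_left u a e1 e2 : a < u -> 0 < e1 -> 0 < e2 ->
  exists v, a <= v < u /\ u - e1 < v /\ u - e2 < v.
Proof.
move=> Hau He1 He2.
set m := Rmax a (Rmax (u - e1) (u - e2)).
have H1 := Rmax_l a (Rmax (u - e1) (u - e2)).
have H2 := Rmax_r a (Rmax (u - e1) (u - e2)).
have H3 := Rmax_l (u - e1) (u - e2).
have H4 := Rmax_r (u - e1) (u - e2).
have Hm : m < u.
  rewrite /m. apply Rmax_lub_lt => //. apply Rmax_lub_lt; lra.
exists ((m + u) / 2). rewrite /m in Hm *. lra.
Qed.

Lemma min3 a b c : 0 < a -> 0 < b -> 0 < c ->
  exists x, 0 < x /\ x <= a /\ x <= b /\ x <= c.
Proof.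
move=> Ha Hb Hc. exists (Rmin a (Rmin b c)).
have := Rmin_l a (Rmin b c). have := Rmin_r a (Rmin b c).
have := Rmin_l b c. have := Rmin_r b c.
have : 0 < Rmin a (Rmin b c) by repeat apply Rmin_pos.
lra.
Qed.

Lemma min2 a b : 0 < a -> 0 < b -> exists x, 0 < x /\ x <= a /\ x <= b.
Proof.
move=> Ha Hb. exists (Rmin a b).
have := Rmin_l a b. have := Rmin_r a b. have : 0 < Rmin a b by apply Rmin_pos.
lra.
Qed.

Lemma left_lim_uniq n (p : R -> 'I_n) t c1 c2 :
  left_lim p t c1 -> left_lim p t c2 -> c1 = c2.
Proof.
move=> [e1 [He1 H1]] [e2 [He2 H2]].
case: (pick_left t (t - 1) e1 e2) => //; try lra.
move=> v [Hv [Hv1 Hv2]]. rewrite -(H1 v) ?(H2 v) //; lra.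
Qed.

Lemma pdist_sym (p q : point) : Defs.dist p q = Defs.dist q p.
Proof. rewrite /Defs.dist. f_equal. ring. Qed.



Lemma pigeon n (h : 'I_n.+1 -> 'I_n) :
  exists x y : 'I_n.+1, (x < y)%N /\ h x = h y.
Proof.
case: (classic (injective h)) => Hi.
  have := leq_card h Hi. by rewrite !card_ord ltnn.
apply NNPP => Hn; apply Hi => x y Hxy.
apply val_inj => /=. apply/eqP. rewrite eqn_leq. apply/andP; split;
  rewrite leqNgt; apply/negP => Hc; apply Hn.
- by exists y, x.
- by exists x, y.
Qed.



Section Main.
Variables (n : nat) (ctr : 'I_n -> point) (r : R) (f g : 'I_n -> R).
Hypothesis Hg : is_schedule g.
Hypothesis Hsync : sync_schedule ctr r f g.
Hypothesis Hdist : forall i j k : 'I_n, adjacent ctr r i j -> adjacent ctr r i k ->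
     link ctr i j = link ctr i k -> j = k.


Lemma spos_shift c t (z : Z) : spos ctr f g c (t + IZR z) = spos ctr f g c t.
Proof.
rewrite /spos /pt /sched.
have -> : f c + g c * (2 * PI * (t + IZR z)) =
          (f c + g c * (2 * PI * t)) + 2 * (g c * IZR z) * PI by ring.
case: (Hg c) => ->.
- have -> : 1 * IZR z = IZR z by ring.
  rewrite cos_periodZ sin_periodZ //.
- have -> : -1 * IZR z = IZR (- z) by rewrite opp_IZR; ring.
  rewrite cos_periodZ sin_periodZ //.
Qed.

Lemma spos_eq c t1 t2 : spos ctr f g c t1 = spos ctr f g c t2 ->
  exists z : Z, t2 = t1 + IZR z.
Proof.
rewrite /spos /pt => [[Hc Hs]].
have Hc' : cos (sched f g c t1) = cos (sched f g c t2) by lra.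
have Hs' : sin (sched f g c t1) = sin (sched f g c t2) by lra.
case: (cossin_eq _ _ Hc' Hs') => z; rewrite /sched => Hz.
have HPI := PI_RGT_0.
case: (Hg c) => Hgc; rewrite Hgc in Hz.
- exists z. apply (Rmult_eq_reg_l (2 * PI)); [|lra]. lra.
- exists (- z)%Z. rewrite opp_IZR. apply (Rmult_eq_reg_l (2 * PI)); [|lra]. lra.
Qed.

Lemma at_link_shift c j t (z : Z) :
  at_link ctr r f g c j (t + IZR z) <-> at_link ctr r f g c j t.
Proof. rewrite /at_link spos_shift //. Qed.

Lemma spos_time c th : exists t, spos ctr f g c t = pt ctr c th.
Proof.
exists ((th - f c) * g c / (2 * PI)).
rewrite /spos /sched. f_equal.
have HPI := PI_RGT_0.
case: (Hg c) => ->; field; lra.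
Qed.

Definition event t := exists c j, at_link ctr r f g c j t.

Lemma separation : exists d, 0 < d /\
  forall t1 t2, event t1 -> event t2 -> t1 < t2 -> d <= t2 - t1.
Proof.
have [d [Hd Hq]] : exists d, 0 < d /\
  forall p : ('I_n * 'I_n) * ('I_n * 'I_n),
   forall t1 t2, at_link ctr r f g p.1.1 p.1.2 t1 -> at_link ctr r f g p.2.1 p.2.2 t2 ->
     t1 < t2 -> d <= t2 - t1.
  apply: fin_min.
    move=> x e e' He' H t1 t2 H1 H2 H12. have := H t1 t2 H1 H2 H12. lra.
  move=> [[c1 j1] [c2 j2]] /=.
  case: (classic (exists e1, at_link ctr r f g c1 j1 e1)) => [[e1 He1]|Hn1]; last first.
    exists 1; split; [lra|] => t1 t2 H1. by case: Hn1; exists t1.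
  case: (classic (exists e2, at_link ctr r f g c2 j2 e2)) => [[e2 He2]|Hn2]; last first.
    exists 1; split; [lra|] => t1 t2 H1 H2. by case: Hn2; exists t2.
  set x := e2 - e1.
  have [Hfl1 Hfl2] := Zfloor_bound x.
  set rr := x - IZR (Zfloor x).
  have Hgen : forall t1 t2, at_link ctr r f g c1 j1 t1 -> at_link ctr r f g c2 j2 t2 ->
     exists w : Z, t2 - t1 = rr + IZR w.
    move=> t1 t2 [_ H1] [_ H2].
    case: He1 => _ He1; case: He2 => _ He2.
    rewrite -He1 in H1; rewrite -He2 in H2.
    case: (spos_eq _ _ _ H1) => z1 Hz1.
    case: (spos_eq _ _ _ H2) => z2 Hz2.
    exists (Zfloor x + z1 - z2)%Z. rewrite minus_IZR plus_IZR /rr /x. lra.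
  have Hr1 : rr < 1 by rewrite /rr; lra.
  have Hr0 : 0 <= rr by rewrite /rr; lra.
  clearbody rr x.
  case: (Rlt_dec 0 rr) => Hrr.
  - exists rr; split => // t1 t2 H1 H2 H12.
    case: (Hgen _ _ H1 H2) => w Hw.
    have : (-1 < w)%Z by apply lt_IZR; lra.
    move=> Hw1. have : 0 <= IZR w by apply IZR_le; lia. lra.
  - exists 1; split; [lra|] => t1 t2 H1 H2 H12.
    case: (Hgen _ _ H1 H2) => w Hw.
    have Hrr0 : rr = 0 by lra.
    have : (0 < w)%Z by apply lt_IZR; lra.
    move=> Hw1. have : 1 <= IZR w by apply IZR_le; lia. lra.
exists d; split => // t1 t2 [c1 [j1 H1]] [c2 [j2 H2]] H12.
exact: (Hq ((c1, j1), (c2, j2)) t1 t2 H1 H2 H12).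
Qed.



Lemma adj_sym i j : adjacent ctr r i j -> adjacent ctr r j i.
Proof. move=> [H1 H2]; split; [by auto|by rewrite pdist_sym]. Qed.

Lemma at_link_sym c j t : at_link ctr r f g c j t -> at_link ctr r f g j c t.
Proof.
move=> [Ha Hs]. split; first exact: adj_sym.
case: Hsync => _ Hs2. by apply (proj2 (Hs2 c j Ha)).
Qed.

Lemma at_link_uniq c j j' t : at_link ctr r f g c j t -> at_link ctr r f g c j' t -> j = j'.
Proof. move=> [Ha Hs] [Ha' Hs']. apply: (Hdist c) => //. by rewrite -Hs -Hs'. Qed.

Lemma at_link_bwd c c' j t : at_link ctr r f g c j t -> at_link ctr r f g c' j t -> c = c'.
Proof. move=> /at_link_sym H /at_link_sym H'. exact: at_link_uniq H H'. Qed.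

Definition rule c t (x : 'I_n) :=
  (exists j, at_link ctr r f g c j t /\ x = j) \/
  ((forall j, ~ at_link ctr r f g c j t) /\ x = c).

Lemma rule_det c t x y : rule c t x -> rule c t y -> x = y.
Proof.
move=> [[j [Hj ->]]|[Hn ->]] [[j' [Hj' ->]]|[Hn' ->]].
- exact: at_link_uniq Hj Hj'.
- by case: (Hn' j).
- by case: (Hn j').
- done.
Qed.

Lemma rule_bwd c1 c2 t x : rule c1 t x -> rule c2 t x -> c1 = c2.
Proof.
move=> [[j [Hj Ex]]|[Hn Ex]] [[j' [Hj' Ex']]|[Hn' Ex']].
- subst. exact: at_link_bwd Hj Hj'.
- subst. case: (Hn' c1). by apply at_link_sym.
- subst. case: (Hn c2). by apply at_link_sym.
- by subst.
Qed.

Definition FM (q : R -> 'I_n) a := forall t, a <= t ->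
  right_const q t /\ exists c, left_lim q t c /\ rule c t (q t).

Lemma free_FM i t0 q : free_motion ctr r f g i t0 q -> FM q t0.
Proof. by move=> [_ H]. Qed.

Lemma FM_mono q a a' : FM q a -> a <= a' -> FM q a'.
Proof. move=> H Ha t Ht. apply H. lra. Qed.

Lemma fm_fwd_det q1 q2 a1 a2 u0 : FM q1 a1 -> FM q2 a2 -> a1 <= u0 -> a2 <= u0 ->
  q1 u0 = q2 u0 -> forall u, u0 <= u -> q1 u = q2 u.
Proof.
move=> F1 F2 H1 H2 E0.
apply: fwd_ind => u Hu IH.
have Equ : q1 u = q2 u.
  case: (Rle_lt_or_eq_dec _ _ Hu) => [Hlt|<-] //.
  case: (F1 u) => [|_ [c1 [[e1 [He1 L1]] R1]]]; first lra.
  case: (F2 u) => [|_ [c2 [[e2 [He2 L2]] R2]]]; first lra.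
  case: (pick_left u u0 e1 e2) => // v [Hv [Hv1 Hv2]].
  have Ec : c1 = c2.
    have <- : q1 v = c1 by apply L1; lra.
    have <- : q2 v = c2 by apply L2; lra.
    apply IH; lra.
  subst. exact: rule_det R1 R2.
case: (F1 u) => [|[e1 [He1 Rc1]] _]; first lra.
case: (F2 u) => [|[e2 [He2 Rc2]] _]; first lra.
have [x [Hx [Hx1 Hx2]]] := min2 e1 e2 He1 He2.
exists x; split => // v Hv.
rewrite Rc1 ?Rc2 //; lra.
Qed.

Lemma fm_bwd_det q1 q2 a b : FM q1 a -> FM q2 a -> a <= b ->
  (forall v, b <= v -> q1 v = q2 v) -> forall v, a <= v -> q1 v = q2 v.
Proof.
move=> F1 F2 Hab Hb v Hv.
case: (Rle_lt_dec b v) => Hbv; first by apply Hb.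
apply: (bwd_ind (fun v => q1 v = q2 v) a b); last lra.
move=> w Hw IH.
have Ew : q1 w = q2 w.
  case: (Rle_lt_or_eq_dec _ _ (proj2 Hw)) => [Hlt|->]; last by apply Hb; lra.
  case: (F1 w) => [|[e1 [He1 Rc1]] _]; first lra.
  case: (F2 w) => [|[e2 [He2 Rc2]] _]; first lra.
  have [x [Hx [Hx1 [Hx2 Hx3]]]] := min3 (b - w) e1 e2 ltac:(lra) He1 He2.
  rewrite -(Rc1 (w + x / 2)); last by lra.
  rewrite -(Rc2 (w + x / 2)); last by lra.
  apply IH; lra.
split => // Haw.
case: (F1 w) => [|_ [c1 [[e1 [He1 L1]] R1]]]; first lra.
case: (F2 w) => [|_ [c2 [[e2 [He2 L2]] R2]]]; first lra.
rewrite Ew in R1.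
have Ec := rule_bwd _ _ _ _ R1 R2. subst c2.
have [x [Hx [Hx1 Hx2]]] := min2 e1 e2 He1 He2.
exists x; split => // u Hu.
rewrite L1 ?L2 //; lra.
Qed.

Lemma rule_shift c t (z : Z) x : rule c (t + IZR z) x <-> rule c t x.
Proof.
rewrite /rule; split.
- move=> [[j [Hj ->]]|[Hn ->]].
  + left; exists j; split => //. by apply (at_link_shift _ _ _ z).
  + right; split => // j Hj. apply (Hn j). by apply at_link_shift.
- move=> [[j [Hj ->]]|[Hn ->]].
  + left; exists j; split => //. by apply at_link_shift.
  + right; split => // j Hj. apply (Hn j). by apply (at_link_shift _ _ _ z).
Qed.

Lemma FM_shift q a (z : Z) : FM q a -> FM (fun u => q (u + IZR z)) (a - IZR z).
Proof.
move=> F t Ht.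
case: (F (t + IZR z)) => [|[e [He Rc]] [c [[e' [He' L]] Ru]]]; first lra.
split.
  exists e; split => // s Hs. apply Rc. lra.
exists c; split.
  exists e'; split => // s Hs. apply L. lra.
by apply (rule_shift _ _ z).
Qed.

Lemma free_start i t0 q : free_motion ctr r f g i t0 q ->
  ~ is_link ctr r i (spos ctr f g i t0) -> q t0 = i.
Proof.
move=> [Hpre F] Hnl.
case: (F t0) => [|_ [c [L Ru]]]; first lra.
have Ec : c = i.
  apply: (left_lim_uniq _ _ _ _ _ L). exists 1; split; [lra|] => s Hs. apply Hpre; lra.
subst c. case: Ru => [[j [[Ha Hs] _]]|[_ ->]] //.
case: Hnl. by exists j.
Qed.

Lemma periodic i t0 q : free_motion ctr r f g i t0 q ->
  ~ is_link ctr r i (spos ctr f g i t0) ->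
  exists N : nat, (0 < N)%N /\ forall u, t0 <= u -> q (u + INR N) = q u.
Proof.
move=> Hfm Hnl.
have F := free_FM _ _ _ Hfm.
case: (pigeon _ (fun m : 'I_n.+1 => q (t0 + INR m))) => o1 [o2 [H12 Eq]].
move: H12 Eq; set m1 := nat_of_ord o1; set m2 := nat_of_ord o2 => H12 Eq.
exists (m2 - m1)%N; split; first by rewrite subn_gt0.
set N := (m2 - m1)%N.
have HN : INR m2 = INR m1 + INR N.
  rewrite -plus_INR /N. f_equal. rewrite plusE subnKC //. by apply ltnW.
have F2 : FM (fun u => q (u + IZR (Z.of_nat N))) (t0 - IZR (Z.of_nat N)).
  exact: FM_shift.
rewrite -INR_IZR_INZ in F2.
have Hpos : 0 <= INR m1 by apply pos_INR.
have HNp : 0 <= INR N by apply pos_INR.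
have Hfw := fm_fwd_det _ _ _ _ (t0 + INR m1) F F2 ltac:(lra) ltac:(lra).
have Hbw := fm_bwd_det _ _ t0 (t0 + INR m1) F
  (FM_mono _ _ t0 F2 ltac:(lra)) ltac:(lra).
move=> u Hu. symmetry. apply: Hbw => // v Hv. apply: Hfw => //.
by rewrite Eq HN Rplus_assoc.
Qed.


Lemma const_free j t0 q b : free_motion ctr r f g j t0 q ->
  (forall t, t0 <= t < b -> ~ event t) -> forall t, t0 <= t < b -> q t = j.
Proof.
move=> [Hpre F] Hne.
have H : forall t, t0 <= t -> t < b -> q t = j.
  apply: fwd_ind => u Hu IH.
  case: (Rlt_le_dec u b) => Hub; last first.
    exists 1; split; [lra|] => v Hv Hvb. lra.
  case: (F u Hu) => [[e [He Rq]] [c [Lc Rc]]].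
  have Lj : left_lim q u j.
    case: (Rle_lt_or_eq_dec _ _ Hu) => [Hlt|<-].
    - case: (pick_left u t0 1 1) => // [||v [Hv [Hv1 _]]]; try lra.
      exists (u - v); split; [lra|] => s Hs. apply IH; lra.
    - exists 1; split; [lra|] => s Hs. apply Hpre; lra.
  have Ec := left_lim_uniq _ _ _ _ _ Lc Lj. subst c.
  have Equ : q u = j.
    case: Rc => [[j' [Hj' _]]|[_ ->]] //.
    exfalso; apply: (Hne u); [lra | by exists j, j'].
  exists e; split => // v Hv Hvb. by rewrite Rq.
move=> t [Ht1 Ht2]. exact: H.
Qed.

Section Construct.
Variables (i : 'I_n) (t0 d : R).
Hypothesis Hd : 0 < d.
Hypothesis Hsep : forall t1 t2, event t1 -> event t2 -> t1 < t2 -> d <= t2 - t1.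

Definition choose_if (P : Prop) (a b : 'I_n) : 'I_n :=
  epsilon (inhabits a) (fun x => (P /\ x = a) \/ (~ P /\ x = b)).

Lemma choose_T (P : Prop) a b : P -> choose_if P a b = a.
Proof.
move=> HP. have := epsilon_spec (inhabits a) (fun x => (P /\ x = a) \/ (~ P /\ x = b)).
case=> [|[_ H]|[H _]] //; first by exists a; left.
Qed.

Lemma choose_F (P : Prop) a b : ~ P -> choose_if P a b = b.
Proof.
move=> HP. have := epsilon_spec (inhabits a) (fun x => (P /\ x = a) \/ (~ P /\ x = b)).
case=> [|[H _]|[_ H]] //; first by exists b; right.
Qed.

Definition inW (m : nat) t := t0 + INR m * d <= t < t0 + INR m * d + d.

Lemma win_one m t1 t2 : event t1 -> event t2 -> inW m t1 -> inW m t2 -> t1 = t2.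
Proof.
move=> E1 E2 W1 W2. rewrite /inW in W1 W2.
case: (Rtotal_order t1 t2) => [H|[H|H]] //.
- have := Hsep _ _ E1 E2 H. lra.
- have := Hsep _ _ E2 E1 H. lra.
Qed.

Definition nxt (c : 'I_n) (m : nat) : 'I_n :=
  choose_if (exists j t, inW m t /\ at_link ctr r f g c j t)
    (epsilon (inhabits c) (fun j => exists t, inW m t /\ at_link ctr r f g c j t)) c.

Lemma nxt_ev c m j t : inW m t -> at_link ctr r f g c j t -> nxt c m = j.
Proof.
move=> Ht Hl. rewrite /nxt choose_T; last by exists j, t.
have := epsilon_spec (inhabits c) (fun j => exists t, inW m t /\ at_link ctr r f g c j t).
case=> [|t' [Ht' Hl']]; first by exists j, t.
have Et : t' = t by apply: (win_one m) => //; [exists c, (epsilon (inhabits c)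
  (fun j0 : 'I_n => exists t1 : R, inW m t1 /\ at_link ctr r f g c j0 t1)) | exists c, j].
subst t'. exact: at_link_uniq Hl' Hl.
Qed.

Lemma nxt_noev c m : (forall j t, inW m t -> ~ at_link ctr r f g c j t) -> nxt c m = c.
Proof.
move=> H. rewrite /nxt choose_F // => [[j [t [Ht Hl]]]]. exact: (H j t).
Qed.

Fixpoint cs (m : nat) : 'I_n := match m with 0 => i | S m' => nxt (cs m') m' end.

Definition idx u := Z.to_nat (Zfloor ((u - t0) / d)).

Lemma idx_spec u : t0 <= u -> inW (idx u) u.
Proof.
move=> Hu. rewrite /inW /idx.
have [H1 H2] := Zfloor_bound ((u - t0) / d).
have H0 : (0 <= Zfloor ((u - t0) / d))%Z.
  apply Zfloor_lub. apply Rmult_le_pos; [lra|]. left; apply Rinv_0_lt_compat; lra.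
rewrite INR_IZR_INZ Z2Nat.id //.
set z := IZR _ in H1 H2 *.
have E : (u - t0) / d * d = u - t0 by field; lra.
split; nra.
Qed.

Lemma idx_eq m u : inW m u -> idx u = m.
Proof.
move=> [H1 H2]. rewrite /idx.
have -> : Zfloor ((u - t0) / d) = Z.of_nat m.
  apply Zfloor_eq. rewrite -INR_IZR_INZ.
  have E : (u - t0) / d * d = u - t0 by field; lra.
  split.
  - apply (Rmult_le_reg_r d) => //. lra.
  - apply (Rmult_lt_reg_r d) => //. lra.
by rewrite Nat2Z.id.
Qed.

Definition Ev m u := exists t j, t0 + INR m * d <= t <= u /\ at_link ctr r f g (cs m) j t.

Definition qc u : 'I_n :=
  if Rlt_dec u t0 then i else choose_if (Ev (idx u) u) (cs (idx u).+1) (cs (idx u)).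

Lemma qc_val m u : inW m u -> qc u =
  choose_if (Ev m u) (cs m.+1) (cs m).
Proof.
move=> Hw. have Hu : t0 <= u.
  have := pos_INR m. rewrite /inW in Hw. nra.
rewrite /qc. destruct (Rlt_dec u t0) as [H|H]; first lra.
by rewrite (idx_eq m u Hw).
Qed.

Lemma qc_E m tau j : inW m tau -> at_link ctr r f g (cs m) j tau ->
  forall u, inW m u -> (tau <= u -> qc u = j) /\ (u < tau -> qc u = cs m).
Proof.
move=> Wt Hl u Wu. rewrite (qc_val m u Wu). split => Hu.
- rewrite choose_T /=; last by exists tau, j; split => //; rewrite /inW in Wt; lra.
  exact: nxt_ev Wt Hl.
- rewrite choose_F // => [[t' [j' [Ht' Hl']]]].
  have : t' = tau.
    apply: (win_one m) => //; [by exists (cs m), j' | by exists (cs m), j |].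
    rewrite /inW in Wu *; lra.
  lra.
Qed.

Lemma qc_N m : (forall j t, inW m t -> ~ at_link ctr r f g (cs m) j t) ->
  forall u, inW m u -> qc u = cs m.
Proof.
move=> Hn u Wu. rewrite (qc_val m u Wu) choose_F // => [[t' [j' [Ht' Hl']]]].
apply: (Hn j' t') => //. rewrite /inW in Wu *; lra.
Qed.

Lemma left_cs m t : inW m t ->
  (forall tau j, t0 + INR m * d <= tau < t -> ~ at_link ctr r f g (cs m) j tau) ->
  left_lim qc t (cs m).
Proof.
move=> Wt Hn.
case: (Rle_lt_or_eq_dec _ _ (proj1 Wt)) => [Hlt|Heq].
- exists (t - (t0 + INR m * d)); split; [lra|] => s Hs.
  have Ws : inW m s by rewrite /inW in Wt *; lra.
  rewrite (qc_val m s Ws) choose_F // => [[t' [j' [Ht' Hl']]]].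
  apply: (Hn t' j') => //; lra.
- move: Heq Wt Hn. case: m => [|m'] Heq Wt Hn.
  + exists 1; split; [lra|] => s Hs. rewrite /qc.
    destruct (Rlt_dec s t0) as [H|H] => //. rewrite INR_0 in Heq. lra.
  + rewrite S_INR in Heq.
    case: (classic (exists tau j, inW m' tau /\ at_link ctr r f g (cs m') j tau)).
    * move=> [tau [j [Wtau Hl]]].
      have Ecs : cs m'.+1 = j by rewrite /= (nxt_ev _ _ _ _ Wtau Hl).
      rewrite Ecs.
      exists (t - tau); split; first by rewrite /inW in Wtau; lra.
      move=> s Hs.
      have Ws : inW m' s by rewrite /inW in Wtau *; lra.
      apply (proj1 (qc_E _ _ _ Wtau Hl s Ws)). lra.
    * move=> Hno.
      have Hno' : forall j t, inW m' t -> ~ at_link ctr r f g (cs m') j t.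
        move=> j t' W' Hl. apply Hno. by exists t', j.
      have Ecs : cs m'.+1 = cs m' by rewrite /= (nxt_noev _ _ Hno').
      rewrite Ecs.
      exists d; split => // s Hs.
      have Ws : inW m' s by rewrite /inW; lra.
      exact: qc_N Hno' s Ws.
Qed.

Lemma qc_free : free_motion ctr r f g i t0 qc.
Proof.
split.
  move=> s Hs. rewrite /qc. destruct (Rlt_dec s t0) as [H|H] => //.
move=> t Ht.
set m := idx t.
have Wt : inW m t by apply idx_spec.
case: (classic (exists tau j, inW m tau /\ at_link ctr r f g (cs m) j tau)).
- move=> [tau [j [Wtau Hl]]].
  have QE := qc_E _ _ _ Wtau Hl.
  have Hnot : forall j' t', inW m t' -> t' <> tau -> ~ at_link ctr r f g j j' t'.
    move=> j' t' Wt' Hne Hl'. apply Hne.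
    apply: (win_one m) => //; [by exists j, j' | by exists (cs m), j].
  have Hnot2 : forall j' t', inW m t' -> t' <> tau -> ~ at_link ctr r f g (cs m) j' t'.
    move=> j' t' Wt' Hne Hl'. apply Hne.
    apply: (win_one m) => //; [by exists (cs m), j' | by exists (cs m), j].
  case: (Rtotal_order tau t) => [Hlt|[Heq|Hgt]].
  + have Eq : qc t = j by apply (proj1 (QE t Wt)); lra.
    split.
      exists (t0 + INR m * d + d - t); split; first by rewrite /inW in Wt; lra.
      move=> s Hs. have Ws : inW m s by rewrite /inW in Wt *; lra.
      rewrite Eq. apply (proj1 (QE s Ws)); lra.
    exists j; split.
      exists (t - tau); split; [lra|] => s Hs.
      have Ws : inW m s by rewrite /inW in Wt Wtau *; lra.
      apply (proj1 (QE s Ws)); lra.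
    right; split => // j' Hl'. apply: (Hnot j' t Wt) => //. lra.
  + subst tau.
    have Eq : qc t = j by apply (proj1 (QE t Wt)); lra.
    split.
      exists (t0 + INR m * d + d - t); split; first by rewrite /inW in Wt; lra.
      move=> s Hs. have Ws : inW m s by rewrite /inW in Wt *; lra.
      rewrite Eq. apply (proj1 (QE s Ws)); lra.
    exists (cs m); split.
      apply left_cs => // tau j' Htau Hl'.
      apply: (Hnot2 j' tau) => //; [rewrite /inW in Wt *; lra | lra].
    left; exists j; split => //.
  + have Eq : qc t = cs m by apply (proj2 (QE t Wt)); lra.
    split.
      exists (tau - t); split; [lra|].
      move=> s Hs. have Ws : inW m s by rewrite /inW in Wt Wtau *; lra.
      rewrite Eq. apply (proj2 (QE s Ws)); lra.
    exists (cs m); split.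
      apply left_cs => // tau' j' Htau Hl'.
      apply: (Hnot2 j' tau') => //; [rewrite /inW in Wt *; lra | lra].
    right; split => // j' Hl'. apply: (Hnot2 j' t Wt) => //. lra.
- move=> Hno.
  have Hno' : forall j t, inW m t -> ~ at_link ctr r f g (cs m) j t.
    move=> j t' W' Hl. apply Hno. by exists t', j.
  have Eq : qc t = cs m by apply: qc_N.
  split.
    exists (t0 + INR m * d + d - t); split; first by rewrite /inW in Wt; lra.
    move=> s Hs. have Ws : inW m s by rewrite /inW in Wt *; lra.
    rewrite Eq. exact: qc_N.
  exists (cs m); split.
    apply left_cs => // tau j' Htau Hl'.
    apply: (Hno' j' tau) => //. rewrite /inW in Wt *; lra.
  right; split => // j' Hl'. exact: (Hno' j' t Wt).
Qed.

End Construct.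

Lemma free_exists i t0 : exists q, free_motion ctr r f g i t0 q.
Proof.
case: separation => d [Hd Hsep].
exists (qc i t0 d). exact: qc_free.
Qed.

Section Robots.
Variables (leave : 'I_n -> option R) (pos : 'I_n -> R -> 'I_n).
Hypothesis Hscs : partial_scs ctr r f g leave pos.
Variable Ts : R.
Hypothesis HTs0 : 0 <= Ts.
Hypothesis HTs : forall k L, leave k = Some L -> L <= Ts.

Definition occ u (x : 'I_n) := exists k, surviving (leave k) /\ pos k u = x.

Lemma surv_present k t : surviving (leave k) -> 0 <= t -> present (leave k) t.
Proof. rewrite /surviving /present => -> //. Qed.

Lemma present_surv k t : Ts <= t -> present (leave k) t -> surviving (leave k).
Proof.
rewrite /surviving /present. case E: (leave k) => [L|] // Ht [_ HL].
have := HTs _ _ E. lra.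
Qed.

Definition rrule k c t :=
  (exists j, at_link ctr r f g c j t /\ empty_at leave pos j t /\ pos k t = j)
  \/ ((forall j, ~ (at_link ctr r f g c j t /\ empty_at leave pos j t)) /\ pos k t = c).

Lemma robot_at k t : present (leave k) t ->
  right_const (pos k) t /\ exists c, left_lim (pos k) t c /\ rrule k c t.
Proof. move=> Hp. case: (Hscs k) => _ H. exact: H. Qed.

Lemma common_left t : 0 <= t -> exists e, 0 < e /\ forall k, surviving (leave k) ->
  exists c, forall s, t - e < s < t -> pos k s = c.
Proof.
move=> Ht.
apply: (fin_min _ (fun k e => surviving (leave k) ->
  exists c, forall s, t - e < s < t -> pos k s = c)).
  move=> k e e' He' H Hs. case: (H Hs) => c Hc. exists c => s Hs'. apply Hc. lra.
move=> k. case: (classic (surviving (leave k))) => Hs; last first.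
  exists 1; split; [lra|] => //.
case: (robot_at k t (surv_present _ _ Hs Ht)) => _ [c [[e [He Hc]] _]].
exists e; split => // _. by exists c.
Qed.

Lemma common_right t : 0 <= t -> exists e, 0 < e /\ forall k, surviving (leave k) ->
  forall s, t <= s < t + e -> pos k s = pos k t.
Proof.
move=> Ht.
apply: (fin_min _ (fun k e => surviving (leave k) ->
  forall s, t <= s < t + e -> pos k s = pos k t)).
  move=> k e e' He' H Hs s Hs'. apply H => //. lra.
move=> k. case: (classic (surviving (leave k))) => Hs; last first.
  exists 1; split; [lra|] => //.
case: (robot_at k t (surv_present _ _ Hs Ht)) => [[e [He Hc]] _].
by exists e; split.
Qed.

Lemma fwd_step u c x k : Ts <= u -> rule c u x -> surviving (leave k) ->
  left_lim (pos k) u c -> occ u x.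
Proof.
move=> Hu Hr Hk Lk.
case: (robot_at k u (surv_present k u Hk ltac:(lra))) => _ [c' [L' Rk]].
have Ec := left_lim_uniq _ _ _ _ _ L' Lk. subst c'.
case: Hr => [[j [Hj ->]]|[Hn ->]].
- case: Rk => [[j' [Hj' [_ Hp]]]|[Hn Hp]].
    exists k; split => //. rewrite Hp. exact: (at_link_uniq _ _ _ _ Hj' Hj).
  have Hne : ~ empty_at leave pos j u by move=> He; apply (Hn j).
  have [k2 [Hp2 L2]] : exists k2, present (leave k2) u /\ left_lim (pos k2) u j.
    apply NNPP => Hc. apply Hne => k2 Hp2 L2. apply Hc. by exists k2.
  have Hs2 := present_surv _ _ Hu Hp2.
  case: (robot_at k2 u Hp2) => _ [c2 [L2' R2]].
  have Ec := left_lim_uniq _ _ _ _ _ L2' L2. subst c2.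
  exists k2; split => //.
  case: R2 => [[j'' [Hj'' [Hemp _]]]|[_ ->]] //.
  have Ej : j'' = c by apply: (at_link_uniq _ _ _ _ Hj''); apply at_link_sym.
  subst j''. exfalso. exact: (Hemp k (surv_present k u Hk ltac:(lra)) Lk).
- exists k; split => //.
  case: Rk => [[j' [Hj' _]]|[_ ->]] //. by case: (Hn j').
Qed.

Lemma bwd_step u c k : Ts <= u -> rule c u (pos k u) -> surviving (leave k) ->
  exists k', surviving (leave k') /\ left_lim (pos k') u c.
Proof.
move=> Hu Hr Hk.
case: (robot_at k u (surv_present k u Hk ltac:(lra))) => _ [c0 [L0 R0]].
case: Hr => [[j [Hj Ej]]|[Hn Ej]].
- case: R0 => [[j' [Hj' [_ Hp]]]|[Hn Hp]].
  + rewrite Hp in Ej. subst j'.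
    rewrite Ej in Hj'. have Ec : c0 = c by exact: (at_link_bwd _ _ _ _ Hj' Hj).
    subst. by exists k.
  + rewrite Hp in Ej. rewrite -Ej in Hj.
    have Hne : ~ empty_at leave pos c u.
      move=> He; apply (Hn c); split => //. by apply at_link_sym.
    have [k2 [Hp2 L2]] : exists k2, present (leave k2) u /\ left_lim (pos k2) u c.
      apply NNPP => Hc. apply Hne => k2 Hp2 L2. apply Hc. by exists k2.
    exists k2; split => //. exact: (present_surv _ _ Hu Hp2).
- case: R0 => [[j' [Hj' [_ Hp]]]|[_ Hp]].
  + rewrite Hp in Ej. rewrite Ej in Hj'. case: (Hn c0). by apply at_link_sym.
  + rewrite Hp in Ej. rewrite Ej in L0. by exists k.
Qed.

Lemma occ_right u x : 0 <= u -> occ u x -> forall q, right_const q u -> q u = x ->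
  exists e, 0 < e /\ forall v, u <= v < u + e -> occ v (q v).
Proof.
move=> Hu [k [Hk Hp]] q [e1 [He1 Rq]] Hq.
case: (robot_at k u (surv_present _ _ Hk Hu)) => [[e2 [He2 Rk]] _].
have [e [He [H1 H2]]] := min2 e1 e2 He1 He2.
exists e; split => // v Hv. exists k; split => //.
rewrite Rk ?Rq ?Hq ?Hp //; lra.
Qed.

Lemma fwd_prop q a : FM q a -> Ts <= a -> occ a (q a) ->
  forall u, a <= u -> occ u (q u).
Proof.
move=> F Ha Oa.
apply: fwd_ind => u Hu IH.
have Ou : occ u (q u).
  case: (Rle_lt_or_eq_dec _ _ Hu) => [Hlt|<-] //.
  case: (F u) => [|_ [c [[e1 [He1 L1]] R1]]]; first lra.
  case: (common_left u) => [|e2 [He2 CL]]; first lra.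
  case: (pick_left u a e1 e2) => // v [Hv [Hv1 Hv2]].
  case: (IH v Hv) => k [Hk Hpk].
  case: (CL k Hk) => ck Hck.
  have Eck : ck = c by rewrite -(Hck v) ?Hpk ?L1 //; lra.
  subst ck.
  apply: (fwd_step u c _ k) => //; first lra.
  by exists e2; split.
case: (F u) => [|Rq _]; first lra.
exact: (occ_right u _ ltac:(lra) Ou q Rq).
Qed.

Lemma bwd_prop q a b : FM q a -> Ts <= a -> a <= b -> occ b (q b) ->
  forall w, a <= w <= b -> occ w (q w).
Proof.
move=> F Ha Hab Ob.
apply: bwd_ind => w Hw IH.
have Ow : occ w (q w).
  case: (Rle_lt_or_eq_dec _ _ (proj2 Hw)) => [Hlt|->] //.
  case: (F w) => [|[e1 [He1 Rq]] _]; first lra.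
  case: (common_right w) => [|e2 [He2 CR]]; first lra.
  have [x [Hx [Hx1 [Hx2 Hx3]]]] := min3 (b - w) e1 e2 ltac:(lra) He1 He2.
  case: (IH (w + x / 2)) => [|k [Hk Hpk]]; first lra.
  exists k; split => //.
  rewrite -(CR k Hk (w + x / 2)) ?Hpk ?Rq //; lra.
split => // Haw.
case: (F w) => [|_ [c [[e1 [He1 L1]] R1]]]; first lra.
case: Ow => k [Hk Hpk]. rewrite -Hpk in R1.
case: (bwd_step w c k) => [|||k' [Hk' [e2 [He2 L2]]]] //; first lra.
have [x [Hx [Hx1 Hx2]]] := min2 e1 e2 He1 He2.
exists x; split => // v Hv. exists k'; split => //.
rewrite L2 ?L1 //; lra.
Qed.

Lemma cov_lemma j t0 q k s w i P : free_motion ctr r f g j t0 q ->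
  ~ is_link ctr r j (spos ctr f g j t0) ->
  surviving (leave k) -> t0 <= s -> pos k Ts = q s ->
  spos ctr f g (q s) s = spos ctr f g (q s) Ts ->
  t0 <= w -> q w = i -> spos ctr f g i w = P ->
  exists Per, 0 < Per /\ forall t, 0 <= t -> exists s', t <= s' <= t + Per /\
    exists k', surviving (leave k') /\ pos k' s' = i /\ spos ctr f g i s' = P.
Proof.
move=> Hfm Hnl Hk Hs Hpk Hsp Hw Hqw HP.
case: (periodic _ _ _ Hfm Hnl) => N [HN Hper].
have HNr : 1 <= INR N by apply (le_INR 1); apply/leP.
have Hqm : forall m : nat, q (w + INR m * INR N) = i.
  elim=> [|m IH]; first by rewrite Rmult_0_l Rplus_0_r.
  rewrite S_INR (_ : w + (INR m + 1) * INR N = (w + INR m * INR N) + INR N); last by ring.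
  rewrite Hper //. have := pos_INR m. nra.
case: (spos_eq _ _ _ Hsp) => z Hz.
have F := FM_shift _ _ (- z) (free_FM _ _ _ Hfm).
rewrite opp_IZR in F.
have F' := FM_mono _ _ Ts F ltac:(lra).
have Hocc : forall u, Ts <= u -> occ u (q (u + - IZR z)).
  apply: (fwd_prop _ Ts F' (Rle_refl _)).
  exists k; split => //; rewrite Hpk /=; f_equal; lra.
set W := w + IZR z.
exists (INR N + Rabs W + Ts + 1); split.
  have := Rabs_pos W. lra.
move=> t Ht.
set t' := Rmax t Ts.
have Ht1 : t <= t' := Rmax_l t Ts. have Ht2 : Ts <= t' := Rmax_r t Ts.
have Ht3 : t' <= t + Ts by rewrite /t'; apply Rmax_lub; lra.
set x := (t' - W) / INR N.
have [Hup1 Hup2] := archimed x.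
have HxN : x * INR N = t' - W by rewrite /x; field; lra.
clearbody x.
have [m [Hm1 Hm2]] : exists m : nat, t' <= W + INR m * INR N <= t' + INR N + Rabs W.
  case: (Z_le_gt_dec 0 (up x)) => Hux.
  - exists (Z.to_nat (up x)). rewrite INR_IZR_INZ Z2Nat.id //.
    have : (IZR (up x) - x) * INR N > 0 by apply Rmult_lt_0_compat; lra.
    have : (1 - (IZR (up x) - x)) * INR N >= 0.
      apply Rle_ge, Rmult_le_pos; lra.
    have := Rabs_pos W. nra.
  - exists 0%N. rewrite INR_0 Rmult_0_l Rplus_0_r.
    have : IZR (up x) <= -1 by apply IZR_le; lia.
    move=> Hu1.
    have : (-1 - x) * INR N > 0 by apply Rmult_lt_0_compat; lra.
    have := Rle_abs W. have := Rabs_pos W. nra.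
have HWm : W + INR m * INR N = (w + INR m * INR N) + IZR z by rewrite /W; ring.
exists (W + INR m * INR N); split; first by lra.
case: (Hocc (W + INR m * INR N)) => [|k' [Hk' Hp']]; first by lra.
exists k'; split => //.
rewrite Hp' HWm Rplus_assoc Rplus_opp_r Rplus_0_r Hqm; split => //.
rewrite spos_shift.
have -> : INR m * INR N = IZR (Z.of_nat m * Z.of_nat N) by rewrite mult_IZR -!INR_IZR_INZ.
by rewrite spos_shift.
Qed.

Lemma rhs_cov : every_ring_has_robot ctr r f g leave pos Ts ->
  all_covered ctr f g leave pos.
Proof.
move=> Hring i th.
case: (classic (is_link ctr r i (pt ctr i th))) => Hl.
- case: Hl => j [Hadj HPl].
  case: (spos_time i th) => t1 Ht1.
  have Hev1 : at_link ctr r f g i j t1 by split => //; rewrite Ht1.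
  case: separation => d [Hd Hsep].
  have Hnl0 : ~ is_link ctr r j (spos ctr f g j (t1 - d / 2)).
    move=> [c [Hc Hc']].
    have := Hsep (t1 - d / 2) t1 ltac:(by exists j, c) ltac:(by exists i, j) ltac:(lra).
    lra.
  case: (Hring j (sched f g j (t1 - d / 2)) Hnl0) => k [Hk [_ [Hnl' [t0 [q [Hst [Hfm [s [Hs [Hqs Hsp]]]]]]]]]].
  case: (spos_eq _ _ _ Hst) => z0 Hz0.
  have Hnoev : forall t, t0 <= t < t0 + d / 2 -> ~ event t.
    move=> t Ht [c [c' Hcc]].
    have Hev : event (t + IZR z0) by exists c, c'; apply at_link_shift.
    have := Hsep (t + IZR z0) t1 Hev ltac:(by exists i, j) ltac:(lra).
    lra.
  have Hcst := const_free _ _ _ (t0 + d / 2) Hfm Hnoev.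
  set w := t0 + d / 2.
  have Hwl : at_link ctr r f g j i w.
    have -> : w = t1 + IZR (- z0) by rewrite /w opp_IZR; lra.
    apply at_link_shift. exact: at_link_sym.
  have Hqw : q w = i.
    case: (free_FM _ _ _ Hfm w) => [|_ [c [Lc Rc]]]; first by rewrite /w; lra.
    have Lj : left_lim q w j.
      exists (d / 2); split; [lra|] => v Hv. apply Hcst. rewrite /w in Hv; lra.
    have Ec := left_lim_uniq _ _ _ _ _ Lc Lj. subst c.
    apply: (rule_det _ _ _ _ Rc). left; by exists i.
  have H1 : ~ is_link ctr r j (spos ctr f g j t0) by rewrite Hst.
  have H2 : pos k Ts = q s by rewrite Hqs.
  have H3 : spos ctr f g (q s) s = spos ctr f g (q s) Ts by rewrite Hqs.
  have H4 : t0 <= w by rewrite /w; lra.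
  have H5 : spos ctr f g i w = pt ctr i th.
    have -> : w = t1 + IZR (- z0) by rewrite /w opp_IZR; lra.
    by rewrite spos_shift.
  exact: (cov_lemma j t0 q k s w i _ Hfm H1 Hk Hs H2 H3 H4 Hqw H5).
- case: (Hring i th Hl) => k [Hk [_ [Hnl' [t0 [q [Hst [Hfm [s [Hs [Hqs Hsp]]]]]]]]]].
  have Hnl0 : ~ is_link ctr r i (spos ctr f g i t0) by rewrite Hst.
  have H2 : pos k Ts = q s by rewrite Hqs.
  have H3 : spos ctr f g (q s) s = spos ctr f g (q s) Ts by rewrite Hqs.
  have H4 : q t0 = i by exact: free_start Hfm Hnl0.
  exact: (cov_lemma i t0 q k s t0 i _ Hfm Hnl0 Hk Hs H2 H3 (Rle_refl _) H4 Hst).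
Qed.

Lemma cov_rhs : all_covered ctr f g leave pos ->
  (forall c j, ~ at_link ctr r f g c j Ts) ->
  every_ring_has_robot ctr r f g leave pos Ts.
Proof.
move=> Hcov Hne i th Hnl.
case: (Hcov i th) => Per [HPer Hc].
case: (Hc Ts HTs0) => s1 [[Hs1a Hs1b] [k1 [Hk1 [Hp1 Hsp1]]]].
have Hnl1 : ~ is_link ctr r i (spos ctr f g i s1) by rewrite Hsp1.
case: (free_exists i s1) => q1 Hq1.
case: (periodic _ _ _ Hq1 Hnl1) => N [HN Hper].
have Hqs1 : q1 s1 = i by exact: free_start Hq1 Hnl1.
have HNr : 1 <= INR N by apply (le_INR 1); apply/leP.
have Hperm : forall m u, s1 <= u -> q1 (u + INR m * INR N) = q1 u.
  elim=> [|m IH] u Hu; first by rewrite INR_0 Rmult_0_l Rplus_0_r.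
  rewrite S_INR (_ : u + (INR m + 1) * INR N = (u + INR m * INR N) + INR N); last by ring.
  rewrite Hper ?IH //. have := pos_INR m. nra.
set K := Z.to_nat (up (s1 - Ts)).
have HK : s1 - Ts <= INR K.
  have [H1 H2] := archimed (s1 - Ts).
  have : (0 <= up (s1 - Ts))%Z by apply le_IZR; lra.
  move=> H0. rewrite /K INR_IZR_INZ Z2Nat.id //. lra.
have HK0 : 0 <= INR K := pos_INR K.
set D := INR K * INR N.
have HD : s1 - Ts <= D by rewrite /D; nra.
have HDz : D = IZR (Z.of_nat K * Z.of_nat N) by rewrite /D mult_IZR -!INR_IZR_INZ.
set q := fun u => q1 (u + D).
have Fq : free_motion ctr r f g i (s1 - D) q.
  split.
    move=> u Hu. rewrite /q. case: Hq1 => Hpre _. apply Hpre. lra.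
  have := FM_shift _ _ (Z.of_nat K * Z.of_nat N) (free_FM _ _ _ Hq1).
  rewrite -HDz. done.
have Hqs : q s1 = i by rewrite /q /D Hperm //; lra.
have F' : FM q Ts := FM_mono _ _ Ts (free_FM _ _ _ Fq) ltac:(lra).
have Ob : occ s1 (q s1) by exists k1; split => //; rewrite Hqs.
case: (bwd_prop q Ts s1 F' (Rle_refl _) Hs1a Ob Ts) => [|k [Hk Hpk]]; first lra.
exists k; split => //.
split => //; split.
  move=> [j [Hadj Hl]]. apply: (Hne (pos k Ts) j). by split.
exists (s1 - D), q; split.
  rewrite HDz -(spos_shift _ _ (Z.of_nat K * Z.of_nat N)).
  rewrite (_ : s1 - _ + _ = s1); last by ring. done.
split => //.
exists Ts; split; [lra|]. split => //.
Qed.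

End Robots.

End Main.


Theorem theorem3 (n : nat) (ctr : 'I_n -> point) (r : R) (f g : 'I_n -> R)
  (leave : 'I_n -> option R) (pos : 'I_n -> R -> 'I_n) :
  disjoint_circles ctr -> 0 < r ->
  (forall i j k : 'I_n, adjacent ctr r i j -> adjacent ctr r i k ->
     link ctr i j = link ctr i k -> j = k) ->
  sync_schedule ctr r f g ->
  partial_scs ctr r f g leave pos ->
  (all_covered ctr f g leave pos <->
   exists t, 0 <= t /\ (forall k L, leave k = Some L -> L <= t) /\
             every_ring_has_robot ctr r f g leave pos t).
Proof.
move=> _ _ Hdist Hsync Hscs.
have Hg : is_schedule g by case: Hsync.
split.
- move=> Hcov.
  case: (fin_bound 'I_n (fun k : 'I_n => match leave k with Some L => L | None => 0 end)) => M HM.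
  set T0 := Rmax 0 M.
  have HT00 : 0 <= T0 := Rmax_l 0 M.
  have HT0M : M <= T0 := Rmax_r 0 M.
  case: (separation n ctr r f g Hg) => d [Hd Hsep].
  have [T [HT1 HT2]] : exists T, T0 <= T /\ ~ event n ctr r f g T.
    case: (classic (event n ctr r f g T0)) => H0.
    + exists (T0 + d / 2); split; [lra|] => H1.
      have := Hsep _ _ H0 H1 ltac:(lra). lra.
    + exists T0; split => //; lra.
  have HTl : forall k L, leave k = Some L -> L <= T.
    move=> k L Hk. have := HM k. rewrite Hk. lra.
  exists T; split; [lra|]; split => //.
  apply: (cov_rhs _ _ _ _ _ Hg Hsync Hdist _ _ Hscs T ltac:(lra) HTl Hcov).
  move=> c j Hl. apply HT2. by exists c, j.
- move=> [t [Ht0 [Hl Hring]]].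
  exact: (rhs_cov _ _ _ _ _ Hg Hsync Hdist _ _ Hscs t Ht0 Hl Hring).
Qed.
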